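(* Let $T,S\in\mathcal{B}_A(\mathcal{H})$. Then $$\omega_A(T+S)\le\sqrt{\omega_A^2(T)+\omega_A^2(S)+\tfrac12\big\|T^{\sharp_A}T+SS^{\sharp_A}\big\|_A+\omega_A(ST)}.$$
   Context: $\mathcal{H}$ is a complex Hilbert space with inner product $\langle\cdot,\cdot\rangle$, and $A$ is a fixed nonzero positive bounded operator on $\mathcal{H}$. Set $\langle x,y\rangle_A=\langle Ax,y\rangle$ and $\|x\|_A=\|A^{1/2}x\|$. $\mathcal{B}_A(\mathcal{H})$ is the set of bounded operators $T$ for which there exists a bounded $S$ with $\langle Tx,y\rangle_A=\langle x,Sy\rangle_A$ for all $x,y$ (equivalently $\mathcal{R}(T^*A)\subseteq\mathcal{R}(A)$). For $T\in\mathcal{B}_A(\mathcal{H})$, $T^{\sharp_A}=A^\dagger T^*A$ ($A^\dagger$ the Moore–Penrose inverse) is the reduced solution of $AX=T^*A$. For an operator $T$ with $\|Tx\|_A\le\lambda\|x\|_A$ for some $\lambda>0$ and all $x$, $\|T\|_A=\sup\{\|Tx\|_A: \|x\|_A=1\}$, and $\omega_A(T)=\sup\{|\langle Tx,x\rangle_A|:\|x\|_A=1\}$. *)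

(* Defs.v *)
From HB Require Import structures.
From mathcomp Require Import all_boot all_order all_algebra.
From mathcomp Require Import complex.
From mathcomp Require Import boolp classical_sets reals.
Set Implicit Arguments. Unset Strict Implicit. Unset Printing Implicit Defensive.
Import Order.TTheory GRing.Theory Num.Theory.
Local Open Scope ring_scope.
Local Open Scope classical_set_scope.

Section Hilbert.
Variables (R : realType) (V : lmodType R[i]) (ip : V -> V -> R[i]).

Definition vnorm (x : V) : R := Num.sqrt (complex.Re (ip x x)).

Definition is_inner_product : Prop :=
  [/\ (forall (a : R[i]) (x y z : V), ip (a *: x + y) z = a * ip x z + ip y z),
      (forall x y : V, ip y x = conjc (ip x y)),
      (forall x : V, complex.Im (ip x x) = 0 /\ 0 <= complex.Re (ip x x)) &
      (forall x : V, ip x x = 0 -> x = 0)].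

Definition is_complete : Prop :=
  forall u : nat -> V,
    (forall e : R, 0 < e -> exists N : nat, forall m n : nat,
        (N <= m)%N -> (N <= n)%N -> vnorm (u m - u n) < e) ->
    exists l : V, forall e : R, 0 < e -> exists N : nat, forall n : nat,
        (N <= n)%N -> vnorm (u n - l) < e.

Definition is_hilbert : Prop := is_inner_product /\ is_complete.

Definition bounded_op (T : V -> V) : Prop :=
  (forall (a : R[i]) (x y : V), T (a *: x + y) = a *: T x + T y) /\
  exists c : R, forall x : V, vnorm (T x) <= c * vnorm x.

Definition positive_op (A : V -> V) : Prop :=
  bounded_op A /\ forall x : V, complex.Im (ip (A x) x) = 0 /\ 0 <= complex.Re (ip (A x) x).

Variable A : V -> V.

Definition ipA (x y : V) : R[i] := ip (A x) y.
Definition normA (x : V) : R := Num.sqrt (complex.Re (ipA x x)).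

Definition in_BA (T : V -> V) : Prop :=
  bounded_op T /\ exists S : V -> V, bounded_op S /\
    forall x y : V, ipA (T x) y = ipA x (S y).

(* X = T^{#_A} = A^dagger T^* A : the reduced solution of A X = T^* A, i.e.
   the bounded solution X of A X = T^* A with range in the closure of R(A).
   A X = T^* A is written through the defining property of the adjoint T^*. *)
Definition is_Asharp (T X : V -> V) : Prop :=
  [/\ bounded_op X,
      (forall x y : V, ip (A (X x)) y = ip (A x) (T y)) &
      (forall x : V, forall e : R, 0 < e -> exists y : V, vnorm (X x - A y) < e)].

Definition cmod (z : R[i]) : R := Num.sqrt (complex.Re z ^+ 2 + complex.Im z ^+ 2).

Definition A_unit_sphere : set V := [set x | normA x = 1].

Definition opnormA (T : V -> V) : R := sup [set normA (T x) | x in A_unit_sphere].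

Definition omegaA (T : V -> V) : R :=
  sup [set cmod (ipA (T x) x) | x in A_unit_sphere].

End Hilbert.

(* Main.v *)
Require Import Defs.
From HB Require Import structures.
From mathcomp Require Import all_boot all_order all_algebra.
From mathcomp Require Import complex.
From mathcomp Require Import boolp classical_sets reals.
From mathcomp Require Import ring lra.
Import Order.TTheory GRing.Theory Num.Theory.
Local Open Scope ring_scope.
Set Implicit Arguments. Unset Strict Implicit.
Section C.
Variable R : realType.
Implicit Types z w : R[i].
Lemma ReD z w : complex.Re (z + w) = complex.Re z + complex.Re w. Proof. by case: z; case: w. Qed.
Lemma ImD z w : complex.Im (z + w) = complex.Im z + complex.Im w. Proof. by case: z; case: w. Qed.
Lemma ReN z : complex.Re (- z) = - complex.Re z. Proof. by case: z. Qed.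
Lemma ImN z : complex.Im (- z) = - complex.Im z. Proof. by case: z. Qed.
Lemma ReM z w : complex.Re (z * w) = complex.Re z * complex.Re w - complex.Im z * complex.Im w. Proof. by case: z; case: w. Qed.
Lemma ImM z w : complex.Im (z * w) = complex.Re z * complex.Im w + complex.Im z * complex.Re w. Proof. by case: z => a b; case: w => c d /=; ring. Qed.
Lemma ReJ z : complex.Re (conjc z) = complex.Re z. Proof. by case: z. Qed.
Lemma ImJ z : complex.Im (conjc z) = - complex.Im z. Proof. by case: z. Qed.
Lemma ReR (k : R) : complex.Re (k%:C)%C = k. Proof. by []. Qed.
Lemma ImR (k : R) : complex.Im (k%:C)%C = 0. Proof. by []. Qed.
Lemma ReI : complex.Re ('i%C : R[i]) = 0. Proof. by []. Qed.
Lemma ImI : complex.Im ('i%C : R[i]) = 1. Proof. by []. Qed.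
Lemma Re1 : complex.Re (1 : R[i]) = 1. Proof. by []. Qed.
Lemma Im1 : complex.Im (1 : R[i]) = 0. Proof. by []. Qed.
Lemma Re0 : complex.Re (0 : R[i]) = 0. Proof. by []. Qed.
Lemma Im0 : complex.Im (0 : R[i]) = 0. Proof. by []. Qed.
Lemma ceqP z w : complex.Re z = complex.Re w -> complex.Im z = complex.Im w -> z = w.
Proof. by case: z => a b; case: w => c d /= -> ->. Qed.
Local Notation cm := (@cmod R).
Lemma cmodE z : `|z| = ((cm z)%:C)%C.
Proof. exact: normc_def. Qed.
Lemma cm_ge0 z : 0 <= cm z. Proof. exact: sqrtr_ge0. Qed.
Lemma cmD z w : cm (z + w) <= cm z + cm w.
Proof.
have := ler_normD z w; rewrite !cmodE -rmorphD.
by rewrite lecR.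
Qed.
Lemma cmM z w : cm (z * w) = cm z * cm w.
Proof. have := normrM z w; rewrite !cmodE => h; apply: (@complexI R); by rewrite h rmorphM. Qed.
Lemma cmN z : cm (- z) = cm z.
Proof. have := normrN z; rewrite !cmodE => h; apply: (@complexI R); by rewrite h. Qed.
Lemma cmJ z : cm (conjc z) = cm z.
Proof. by rewrite /cm ReJ ImJ sqrrN. Qed.
Lemma cm2 : cm (2 : R[i]) = 2.
Proof. have := @ger0_norm _ (2 : R[i]) (ler0n _ 2); rewrite !cmodE => h; apply: (@complexI R); by rewrite h rmorph_nat. Qed.
Lemma Re_le_cm z : complex.Re z <= cm z.
Proof.
rewrite /cm; apply: le_trans (ler_wsqrtr (_ : complex.Re z ^+ 2 <= _)).
  by rewrite sqrtr_sqr ler_norm.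
by rewrite lerDl sqr_ge0.
Qed.
Lemma conjD z w : conjc (z + w) = conjc z + conjc w.
Proof. by apply: ceqP; rewrite !(ReD, ImD, ReJ, ImJ) // opprD. Qed.
Lemma conjN z : conjc (- z) = - conjc z.
Proof. by apply: ceqP; rewrite !(ReN, ImN, ReJ, ImJ). Qed.
Lemma conjM z w : conjc (z * w) = conjc z * conjc w.
Proof. apply: ceqP; rewrite !(ReM, ImM, ReJ, ImJ); ring. Qed.
Lemma conj2 : conjc (2 : R[i]) = 2.
Proof.
have c1 : conjc (1 : R[i]) = 1 by apply: ceqP; rewrite ?ReJ ?ImJ ?Im1 ?oppr0.
by rewrite (_ : (2 : R[i]) = 1 + 1) // conjD c1.
Qed.
Lemma conjcc z : conjc (conjc z) = z.
Proof. by apply: ceqP; rewrite !(ReJ, ImJ) ?opprK. Qed.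
End C.
Local Notation cm := cmod.

Definition nfd (R : realType) (V : lmodType R[i]) (f : V -> V -> R[i]) (x : V) : R :=
  Num.sqrt (complex.Re (f x x)).

Lemma cs_real (R : realType) (ur vr n : R) : 0 <= ur -> 0 <= vr -> 0 <= n ->
  (forall t, 0 <= ur - 2 * t * n + t ^+ 2 * n * vr) -> n <= ur * vr.
Proof.
move=> hu hv hn H.
have [vp|vn] := ltrP 0 vr.
  have h := H vr^-1.
  have h2 := mulr_ge0 h (ltW vp).
  have e : (ur - 2 * vr^-1 * n + vr^-1 ^+ 2 * n * vr) * vr = ur * vr - n.
    by field; rewrite gt_eqF.
  rewrite e in h2.
  by rewrite -subr_ge0.
have v0 : vr = 0 by apply/eqP; rewrite eq_le vn hv.
rewrite v0 mulr0.
have [np|] := ltrP 0 n; last by [].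
have := H ((ur + 1) / (2 * n)).
rewrite v0 mulr0 addr0.
have -> : 2 * ((ur + 1) / (2 * n)) * n = ur + 1.
  by field; rewrite ?mulf_neq0 ?gt_eqF ?pnatr_eq0 ?andbT.
move=> h; exfalso; move: h; rewrite opprD addrA subrr add0r.
by rewrite oppr_ge0 ler10.
Qed.

Lemma eqle (R : realType) (x y : R) : x = y -> x <= y.
Proof. by move=> ->. Qed.

Section Form.
Variables (R : realType) (V : lmodType R[i]) (f : V -> V -> R[i]).
Hypothesis fl : forall (a : R[i]) x y z, f (a *: x + y) z = a * f x z + f y z.
Hypothesis fh : forall x y, f y x = conjc (f x y).
Hypothesis fp : forall x, complex.Im (f x x) = 0 /\ 0 <= complex.Re (f x x).
Local Notation nf := (nfd f).

Lemma fD1 x y z : f (x + y) z = f x z + f y z.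
Proof. by have := fl 1 x y z; rewrite scale1r mul1r. Qed.
Lemma f0l z : f 0 z = 0.
Proof. have h := fD1 0 0 z; rewrite addr0 in h. by apply: (addrI (f 0 z)); rewrite addr0 -h. Qed.
Lemma fZ1 a x z : f (a *: x) z = a * f x z.
Proof. by have := fl a x 0 z; rewrite addr0 f0l addr0. Qed.
Lemma fN1 x z : f (- x) z = - f x z.
Proof. by rewrite -scaleN1r fZ1 mulN1r. Qed.
Lemma fB1 x y z : f (x - y) z = f x z - f y z.
Proof. by rewrite fD1 fN1. Qed.
Lemma fD2 x y z : f z (x + y) = f z x + f z y.
Proof. by rewrite fh fD1 conjD -!fh. Qed.
Lemma fZ2 a x z : f z (a *: x) = conjc a * f z x.
Proof. by rewrite fh fZ1 conjM -fh. Qed.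
Lemma fN2 x z : f z (- x) = - f z x.
Proof. by rewrite fh fN1 conjN -fh. Qed.
Lemma fB2 x y z : f z (x - y) = f z x - f z y.
Proof. by rewrite fD2 fN2. Qed.
Lemma fRe x : ((complex.Re (f x x))%:C)%C = f x x.
Proof. by apply: ceqP; rewrite ?ReR // ImR (fp x).1. Qed.
Lemma nf_ge0 x : 0 <= nf x. Proof. exact: sqrtr_ge0. Qed.
Lemma nf_sq x : nf x ^+ 2 = complex.Re (f x x).
Proof. exact: sqr_sqrtr (fp x).2. Qed.

Lemma f_expand u v c : f (u - c *: v) (u - c *: v) =
  f u u - conjc c * f u v - c * f v u + c * conjc c * f v v.
Proof. rewrite fB1 !fB2 !fZ1 !fZ2; ring. Qed.

Lemma cs u v : cm (f u v) <= nf u * nf v.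
Proof.
set z := f u v.
have H : complex.Re z ^+ 2 + complex.Im z ^+ 2 <= complex.Re (f u u) * complex.Re (f v v).
  apply: cs_real; [exact: (fp u).2 | exact: (fp v).2 | by rewrite addr_ge0 ?sqr_ge0 |].
  move=> t; have := (fp (u - (t%:C%C * z) *: v)).2.
  rewrite f_expand (fh u v) -/z.
  rewrite !(ReD, ImD, ReN, ImN, ReM, ImM, ReJ, ImJ, ReR, ImR) (fp v).1.
  move=> h; apply: (le_trans h); rewrite le_eqVlt; apply/orP; left; apply/eqP; ring.
rewrite /cm /nfd -sqrtrM; last exact: (fp u).2.
exact: ler_wsqrtr.
Qed.

Lemma buzano a e b : complex.Re (f e e) = 1 ->
  2 * cm (f a e * f e b) <= nf a * nf b + cm (f a b).
Proof.
move=> he.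
have fee : f e e = 1 by rewrite -fRe he.
set p := f b e.
set w := b - (2 * p) *: e.
have hw : f w w = f b b.
  rewrite /w f_expand fee (fh b e) -/p conjM conj2 ?conjcc; ring.
have nw : nf w = nf b by rewrite /nfd hw.
have faw : f a w = f a b - 2 * (f a e * f e b).
  by rewrite /w fB2 fZ2 conjM conj2 /p -fh; ring.
have := cs a w; rewrite nw faw.
have := cmD (- (f a b - 2 * (f a e * f e b))) (f a b).
rewrite cmN opprB subrK cmM cm2.
move=> h1 h2; lra.
Qed.

Lemma nfD u v : nf (u + v) <= nf u + nf v.
Proof.
have h : complex.Re (f (u + v) (u + v)) <= (nf u + nf v) ^+ 2.
  rewrite fD1 !fD2 (fh u v) !ReD ReJ sqrrD !nf_sq.
  have := Re_le_cm (f u v); have := cs u v; lra.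
rewrite /nfd -[X in _ <= X]ger0_norm ?addr_ge0 ?nf_ge0 // -sqrtr_sqr.
exact: ler_wsqrtr.
Qed.

Lemma abound (X Y : V -> V) (N : V -> R) (K D : R) :
  0 <= K -> 0 < D ->
  (forall u, nf u ^+ 2 <= K * N u ^+ 2) ->
  (forall u, N (Y (X u)) <= D * N u) -> (forall u, 0 <= N u) ->
  (forall x y, f (X x) y = f x (Y y)) ->
  forall x, nf (X x) ^+ 2 <= D * nf x ^+ 2.
Proof.
move=> K0 Dp HK HD HN adj x.
pose B := fun u => Y (X u).
have sym : forall u v, f (B u) v = f u (B v).
  by move=> u v; rewrite /B fh -adj -fh adj.
have pw : forall j i, f (iter i B x) (iter j B x) = f (iter (i + j)%N B x) x.
  elim=> [|j IH] i; first by rewrite addn0.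
  by rewrite iterS -sym -iterS IH addSnnS.
pose s m := complex.Re (f (iter m B x) (iter m B x)).
have s_ge0 m : 0 <= s m by exact: (fp _).2.
set r2 := complex.Re (f x x).
have r2_ge0 : 0 <= r2 by exact: (fp _).2.
have s_sq : forall m, s m ^+ 2 <= s (m + m)%N * r2.
  move=> m.
  have h2 : s m <= cm (f (iter (m + m)%N B x) x) by rewrite /s pw; exact: Re_le_cm.
  have h3 := le_trans h2 (cs (iter (m + m)%N B x) x).
  have h4 : s m ^+ 2 <= (nf (iter (m + m)%N B x) * nf x) ^+ 2.
    by rewrite !expr2; exact (ler_pM (s_ge0 m) (s_ge0 m) h3 h3).
  by rewrite exprMn !nf_sq in h4.
have N_it : forall m, N (iter m B x) <= D ^+ m * N x.
  elim=> [|m IH]; first by rewrite expr0 mul1r.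
  rewrite iterS exprS -mulrA.
  apply: (le_trans (HD (iter m B x))).
  by rewrite ler_pM2l.
have s_bd : forall m, s m <= K * (D ^+ m * N x) ^+ 2.
  move=> m; rewrite /s -nf_sq; apply: le_trans (HK _) _.
  have h : N (iter m B x) ^+ 2 <= (D ^+ m * N x) ^+ 2.
    by rewrite !expr2; exact (ler_pM (HN _) (HN _) (N_it m) (N_it m)).
  exact (ler_pM K0 (sqr_ge0 _) (lexx K) h).
have hX : nf (X x) ^+ 2 = complex.Re (f (B x) x).
  by rewrite nf_sq adj (pw 1%N 0%N).
have h1 : nf (X x) ^+ 2 <= nf (B x) * nf x.
  by rewrite hX; apply: le_trans (Re_le_cm _) (cs _ _).
have claim : s 1%N <= D ^+ 2 * r2.
  have [r0|rp] := eqVneq r2 0.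
    have := s_sq 1%N; rewrite r0 mulr0 mulr0 => h.
    have := s_ge0 1%N; nra.
  have rp' : 0 < r2 by rewrite lt_def rp r2_ge0.
  rewrite leNgt; apply/negP => hlt.
  pose t := s 1%N / (D ^+ 2 * r2).
  have D2p : 0 < D ^+ 2 * r2 by rewrite mulr_gt0 // exprn_gt0.
  have t1 : 1 < t by rewrite /t ltr_pdivlMr // mul1r.
  pose L m := t ^+ m * r2 * D ^+ (m + m)%N.
  have Lg : forall n, L (2 ^ n)%N <= s (2 ^ n)%N.
    elim=> [|n IH].
      rewrite expn0 /L /t; apply: eqle; field.
      by rewrite ?mulf_neq0 ?expf_neq0 ?gt_eqF ?andbT.
    rewrite expnS mul2n -addnn.
    set m := (2 ^ n)%N in IH *.
    have L0 : 0 <= L m by rewrite /L !mulr_ge0 ?exprn_ge0 // ltW // (lt_trans _ t1).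
    have e : L (m + m)%N * r2 = L m ^+ 2 by rewrite /L !exprD; ring.
    have h : L (m + m)%N * r2 <= s (m + m)%N * r2.
      rewrite e; apply: le_trans (s_sq m).
      by rewrite !expr2; exact (ler_pM L0 L0 IH IH).
    by rewrite ler_pM2r in h.
  set M := K * N x ^+ 2 / r2.
  have tM : forall n, t ^+ (2 ^ n)%N <= M.
    move=> n; set m := (2 ^ n)%N.
    have h := le_trans (Lg n) (s_bd m).
    have e : K * (D ^+ m * N x) ^+ 2 = K * N x ^+ 2 * D ^+ (m + m) by rewrite exprD; ring.
    rewrite e /L in h.
    have Dm : 0 < D ^+ (m + m) by rewrite exprn_gt0.
    rewrite /M ler_pdivlMr //.
    have : t ^+ m * r2 * D ^+ (m + m) <= K * N x ^+ 2 * D ^+ (m + m).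
      exact: h.
    by rewrite ler_pM2r.
  have bern : forall n, 1 + n%:R * (t - 1) <= t ^+ n.
    elim=> [|n IH]; first by rewrite mul0r addr0 expr0.
    rewrite exprS -natr1.
    have t0 : 0 < t by apply: lt_trans t1.
    have h : t * (1 + n%:R * (t - 1)) <= t * t ^+ n by rewrite ler_pM2l.
    have h2 : 0 <= n%:R * (t - 1) ^+ 2 :> R by rewrite mulr_ge0 ?ler0n ?sqr_ge0.
    apply: le_trans h; rewrite -subr_ge0.
    have -> : t * (1 + n%:R * (t - 1)) - (1 + (n%:R + 1) * (t - 1)) = n%:R * (t - 1) ^+ 2 by ring.
    exact: h2.
  have M0 : 0 <= M / (t - 1) by rewrite divr_ge0 ?mulr_ge0 ?invr_ge0 ?sqr_ge0 ?subr_ge0 // ltW.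
  set n := Num.bound (M / (t - 1)).
  have hn := archi_boundP M0; rewrite -/n in hn.
  have h1n : t ^+ n <= t ^+ (2 ^ n)%N.
    by rewrite ler_eXn2l // ltnW // ltn_expl.
  have := le_trans (bern n) (le_trans h1n (tM n)).
  have : M < n%:R * (t - 1) by rewrite -ltr_pdivrMr // subr_gt0.
  lra.
have hfin : (nf (X x) ^+ 2) ^+ 2 <= (D * r2) ^+ 2.
  have e1 : (nf (B x) * nf x) ^+ 2 = s 1%N * r2 by rewrite exprMn !nf_sq.
  have h0 : 0 <= nf (X x) ^+ 2 by exact: sqr_ge0.
  have h2 : (nf (X x) ^+ 2) ^+ 2 <= (nf (B x) * nf x) ^+ 2.
    by rewrite !expr2; exact (ler_pM h0 h0 h1 h1).
  apply: (le_trans h2); rewrite e1 exprMn.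
  rewrite (expr2 r2) mulrA; exact (ler_pM (s_ge0 _) r2_ge0 claim (lexx r2)).
rewrite !nf_sq -/r2.
rewrite !nf_sq in hfin.
have := (fp (X x)).2; have := mulr_ge0 (ltW Dp) r2_ge0.
move: hfin; set a := complex.Re _; set b := D * r2 => hfin hb ha.
rewrite leNgt; apply/negP => hlt.
have := ltr_pM hb hb hlt hlt.
rewrite -!expr2; lra.
Qed.

Lemma key (T S Tsh Ssh : V -> V) x : complex.Re (f x x) = 1 ->
  (forall u y, f (Tsh u) y = f u (T y)) -> (forall u y, f (Ssh u) y = f u (S y)) ->
  cm (f (T x + S x) x) ^+ 2 <= cm (f (T x) x) ^+ 2 + cm (f (S x) x) ^+ 2
     + 2^-1 * nf (Tsh (T x) + S (Ssh x)) + cm (f (S (T x)) x).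
Proof.
move=> hx hT hS.
have nx : nf x = 1 by rewrite /nfd hx sqrtr1.
set a := cm (f (T x) x); set b := cm (f (S x) x).
have hL : cm (f (T x + S x) x) <= a + b by rewrite fD1; exact: cmD.
have eS : f (S x) x = f x (Ssh x) by rewrite (fh (Ssh x) x) hS -fh.
have eST : f (T x) (Ssh x) = f (S (T x)) x by rewrite fh hS -fh.
have hB := buzano (T x) (Ssh x) hx.
rewrite -eS eST cmM -/a -/b in hB.
have hT2 : nf (T x) ^+ 2 = complex.Re (f (Tsh (T x)) x) by rewrite nf_sq hT.
have hS2 : nf (Ssh x) ^+ 2 = complex.Re (f (S (Ssh x)) x) by rewrite nf_sq hS fh ReJ.
have hM : complex.Re (f (Tsh (T x)) x) + complex.Re (f (S (Ssh x)) x) <= nf (Tsh (T x) + S (Ssh x)).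
  rewrite -ReD -fD1; apply: le_trans (Re_le_cm _) _.
  by have := cs (Tsh (T x) + S (Ssh x)) x; rewrite nx mulr1.
have amgm : nf (T x) * nf (Ssh x) <= (nf (T x) ^+ 2 + nf (Ssh x) ^+ 2) / 2.
  have := sqr_ge0 (nf (T x) - nf (Ssh x)); nra.
have hL2 : cm (f (T x + S x) x) ^+ 2 <= (a + b) ^+ 2.
  have := cm_ge0 (f (T x + S x) x); nra.
rewrite sqrrD in hL2.
rewrite hT2 hS2 in amgm.
have := cm_ge0 (f (S (T x)) x).
lra.
Qed.
End Form.

Lemma polar (R : realType) (V : lmodType R[i]) (g : V -> V -> R[i]) :
 (forall x y z, g (x + y) z = g x z + g y z) ->
 (forall a x z, g (a *: x) z = a * g x z) ->
 (forall x y z, g z (x + y) = g z x + g z y) ->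
 (forall a x z, g z (a *: x) = conjc a * g z x) ->
 (forall x, complex.Im (g x x) = 0) -> forall u v, g v u = conjc (g u v).
Proof.
move=> D1 Z1 D2 Z2 Hr u v.
have h1 := Hr (u + v); rewrite D1 !D2 !ImD (Hr u) (Hr v) in h1.
have h2 := Hr ('i%C *: u + v).
rewrite D1 !D2 !Z1 !Z2 !(ImD, ImM, ReM, ReJ, ImJ, ReI, ImI, ReD) (Hr u) (Hr v) in h2.
apply: ceqP; rewrite ?ReJ ?ImJ; lra.
Qed.

Lemma abound2 (R : realType) (V : lmodType R[i]) (f : V -> V -> R[i])
  (fl : forall (a : R[i]) x y z, f (a *: x + y) z = a * f x z + f y z)
  (fh : forall x y, f y x = conjc (f x y))
  (fp : forall x, complex.Im (f x x) = 0 /\ 0 <= complex.Re (f x x))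
  (X Y : V -> V) (N : V -> R) (K cX cY : R) :
  0 <= K -> (forall u, nfd f u ^+ 2 <= K * N u ^+ 2) ->
  (forall u, N (X u) <= cX * N u) -> (forall u, N (Y u) <= cY * N u) ->
  (forall u, 0 <= N u) -> (forall x y, f (X x) y = f x (Y y)) ->
  exists c, 0 <= c /\ forall x, nfd f (X x) <= c * nfd f x.
Proof.
move=> K0 HK hX hY HN adj.
set D := `|cY| * `|cX| + 1.
have Dp : 0 < D by rewrite /D ltr_pwDr // mulr_ge0.
have HD : forall u, N (Y (X u)) <= D * N u.
  move=> u; apply: le_trans (hY _) _.
  apply: le_trans (ler_wpM2r (HN _) (ler_norm cY)) _.
  apply: le_trans (ler_wpM2l (normr_ge0 cY) (hX u)) _.
  apply: le_trans (ler_wpM2l (normr_ge0 cY) (ler_wpM2r (HN u) (ler_norm cX))) _.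
  by rewrite mulrA ler_wpM2r // /D lerDl.
have hb := abound fl fh fp K0 Dp HK HD HN adj.
exists (Num.sqrt D); split; first exact: sqrtr_ge0.
move=> x; have h := hb x.
have hs : Num.sqrt D ^+ 2 = D by rewrite sqr_sqrtr // ltW.
rewrite -hs -exprMn in h.
have h1 := nf_ge0 f (X x); have h2 := mulr_ge0 (sqrtr_ge0 D) (nf_ge0 f x).
move: h h1 h2; set a := nfd f (X x); set b := _ * _ => h h1 h2.
rewrite leNgt; apply/negP => hlt.
have := ltr_pM h2 h2 hlt hlt.
rewrite -!expr2; lra.
Qed.

Unset Implicit Arguments.

Theorem theorem3p6 (R : realType) (V : lmodType R[i]) (ip : V -> V -> R[i])
  (A T S Tsh Ssh : V -> V) :
  is_hilbert ip ->
  positive_op ip A -> (exists x : V, A x != 0) ->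
  in_BA ip A T -> in_BA ip A S ->
  is_Asharp ip A T Tsh -> is_Asharp ip A S Ssh ->
  omegaA ip A (fun x => T x + S x) <=
  Num.sqrt (omegaA ip A T ^+ 2 + omegaA ip A S ^+ 2
            + 2^-1 * opnormA ip A (fun x => Tsh (T x) + S (Ssh x))
            + omegaA ip A (fun x => S (T x))).
Proof.
move=> [[ipl iph ipp _] _] [[Alin [cA hA]] Apos] _.
move=> [[Tlin [cT hTb]] [T' [[_ [cT' hT'b]] hTadj]]].
move=> [[Slin [cS hSb]] [S' [[_ [cS' hS'b]] hSadj]]].
move=> [[_ [cTs hTsb]] hTsh _] [[_ [cSs hSsb]] hSsh _].
set f := ipA ip A.
have A0 : A 0 = 0.
  have := Alin 1 0 0; rewrite !scale1r !addr0 => h.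
  by apply: (addrI (A 0)); rewrite addr0 -h.
have gD1 : forall x y z, f (x + y) z = f x z + f y z.
  move=> x y z; rewrite /f /ipA.
  have := Alin 1 x y; rewrite !scale1r => ->.
  exact: (fD1 ipl).
have gZ1 : forall a x z, f (a *: x) z = a * f x z.
  move=> a x z; rewrite /f /ipA -[a *: x]addr0 Alin A0 addr0.
  by rewrite -[a *: A x]addr0 ipl (f0l ipl) addr0.
have gD2 : forall x y z, f z (x + y) = f z x + f z y.
  by move=> x y z; rewrite /f /ipA (fD2 ipl iph).
have gZ2 : forall a x z, f z (a *: x) = conjc a * f z x.
  by move=> a x z; rewrite /f /ipA (fZ2 ipl iph).
have gh := polar gD1 gZ1 gD2 gZ2 (fun x => (Apos x).1).
have gl : forall (a : R[i]) x y z, f (a *: x + y) z = a * f x z + f y z.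
  by move=> a x y z; rewrite gD1 gZ1.
have gp : forall x, complex.Im (f x x) = 0 /\ 0 <= complex.Re (f x x) := Apos.
have HN : forall u, 0 <= nfd ip u by move=> u; exact: sqrtr_ge0.
have HK : forall u, nfd f u ^+ 2 <= `|cA| * nfd ip u ^+ 2.
  move=> u; rewrite (nf_sq gp).
  apply: le_trans (Re_le_cm _) _.
  apply: le_trans (cs ipl iph ipp (A u) u) _.
  rewrite expr2 mulrA.
  have h1 : nfd ip (A u) <= `|cA| * nfd ip u := le_trans (hA u) (ler_wpM2r (HN u) (ler_norm cA)).
  exact (ler_wpM2r (HN u) h1).
have K0 : 0 <= `|cA| by exact: normr_ge0.
have [kT [kT0 bT]] := abound2 gl gh gp K0 HK hTb hT'b HN hTadj.
have [kS [kS0 bS]] := abound2 gl gh gp K0 HK hSb hS'b HN hSadj.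
have [kTs [kTs0 bTs]] := abound2 gl gh gp K0 HK hTsb hTb HN hTsh.
have [kSs [kSs0 bSs]] := abound2 gl gh gp K0 HK hSsb hSb HN hSsh.
have sph : forall x, A_unit_sphere ip A x -> nfd f x = 1 by [].
have omega_ub : forall (X : V -> V) c, (forall x, nfd f (X x) <= c * nfd f x) ->
    forall x, A_unit_sphere ip A x -> cmod (f (X x) x) <= omegaA ip A X.
  move=> X c hX x hx; apply: ub_le_sup; last by exists x.
  exists c => y [z hz <-].
  apply: le_trans (cs gl gh gp (X z) z) _.
  by rewrite (sph z hz) mulr1; have := hX z; rewrite (sph z hz) mulr1.
have op_ub : forall (X : V -> V) c, (forall x, nfd f (X x) <= c * nfd f x) ->
    forall x, A_unit_sphere ip A x -> nfd f (X x) <= opnormA ip A X.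
  move=> X c hX x hx; apply: ub_le_sup; last by exists x.
  exists c => y [z hz <-].
  by have := hX z; rewrite (sph z hz) mulr1.
have bST : forall x, nfd f (S (T x)) <= kS * kT * nfd f x.
  move=> x; apply: le_trans (bS _) _; rewrite -mulrA; exact (ler_wpM2l kS0 (bT x)).
have bM : forall x, nfd f (Tsh (T x) + S (Ssh x)) <= (kTs * kT + kS * kSs) * nfd f x.
  move=> x; apply: le_trans (nfD gl gh gp _ _) _.
  rewrite mulrDl; apply: lerD.
    apply: le_trans (bTs _) _; rewrite -mulrA; exact (ler_wpM2l kTs0 (bT x)).
  apply: le_trans (bS _) _; rewrite -mulrA; exact (ler_wpM2l kS0 (bSs x)).
rewrite {1}/omegaA.
set E := (X in sup X <= _).
have [[y Ey]|E0] := pselect (exists y, E y); last first.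
  rewrite (_ : E = set0) ?sup0 ?sqrtr_ge0 //.
  by apply/seteqP; split=> [z hz|z []]; exfalso; apply: E0; exists z.
apply: ge_sup; first by exists y.
move=> z [x hx <-].
have hx1 : complex.Re (f x x) = 1.
  by rewrite -(nf_sq gp) (sph x hx) expr1n.
have hk := key gl gh gp hx1 hTsh hSsh.
have ha := omega_ub T kT bT x hx.
have hb := omega_ub S kS bS x hx.
have hc := omega_ub (fun x => S (T x)) _ bST x hx.
have hm := op_ub (fun x => Tsh (T x) + S (Ssh x)) _ bM x hx.
have a0 := cm_ge0 (f (T x) x); have b0 := cm_ge0 (f (S x) x).
have ha2 : cmod (f (T x) x) ^+ 2 <= omegaA ip A T ^+ 2.
  by rewrite !expr2; exact (ler_pM a0 a0 ha ha).
have hb2 : cmod (f (S x) x) ^+ 2 <= omegaA ip A S ^+ 2.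
  by rewrite !expr2; exact (ler_pM b0 b0 hb hb).
have hL : cmod (f (T x + S x) x) ^+ 2 <= omegaA ip A T ^+ 2 + omegaA ip A S ^+ 2
            + 2^-1 * opnormA ip A (fun x => Tsh (T x) + S (Ssh x))
            + omegaA ip A (fun x => S (T x)).
  apply: (le_trans hk); simpl in hc, hm.
  have h2 : 0 <= 2^-1 :> R by rewrite invr_ge0 ler0n.
  have := ler_wpM2l h2 hm.
  lra.
rewrite -[cmod _]ger0_norm ?cm_ge0 // -sqrtr_sqr.
exact: ler_wsqrtr.
Qed.
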